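(* Let $m\ge 0$ and call a square of type B$'$ any $4\times 4$ array with entries in $\{0,1,\dots,2^m-1\}$ whose first row and first column consist of zeros and in which every row and every column has bitwise XOR equal to $0$ (repetitions allowed). Then, up to applying an invertible affine transformation of $\mathbb{Z}_2^m$ to all entries (entries identified with vectors of $\mathbb{Z}_2^m$ via binary expansion), permuting the last three rows, permuting the last three columns, and reflecting along the main diagonal, every square of type B$'$ is one of the following ten arrays (rows listed top to bottom, separated by semicolons; only those whose entries are less than $2^m$ occur): (1) $0,0,0,0;\ 0,0,0,0;\ 0,0,0,0;\ 0,0,0,0$; (2) $0,0,0,0;\ 0,0,0,0;\ 0,0,1,1;\ 0,0,1,1$; (3) $0,0,0,0;\ 0,0,0,0;\ 0,1,2,3;\ 0,1,2,3$; (4) $0,0,0,0;\ 0,0,1,1;\ 0,1,0,1;\ 0,1,1,0$; (5) $0,0,0,0;\ 0,0,1,1;\ 0,1,2,3;\ 0,1,3,2$; (6) $0,0,0,0;\ 0,0,1,1;\ 0,2,0,2;\ 0,2,1,3$; (7) $0,0,0,0;\ 0,0,1,1;\ 0,2,4,6;\ 0,2,5,7$; (8) $0,0,0,0;\ 0,1,2,3;\ 0,2,3,1;\ 0,3,1,2$; (9) $0,0,0,0;\ 0,1,2,3;\ 0,2,4,6;\ 0,3,6,5$; (10) $0,0,0,0;\ 0,1,2,3;\ 0,4,8,12;\ 0,5,10,15$.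
   Context: Bitwise XOR of nonnegative integers is addition in $\mathbb{Z}_2^m$ of their binary expansions. Squares of type B$'$ are the squares of type B (in the EvenQuads-$2^{m+4}$ deck: arrays of multiples of $16$ with zero first row and column and all rows/columns XOR-ing to $0$) divided by $16$. *)

(* Defs.v *)
From mathcomp Require Import all_boot all_order all_algebra all_fingroup.
Set Implicit Arguments. Unset Strict Implicit. Unset Printing Implicit Defensive.
Import GRing.Theory.
Local Open Scope ring_scope.

(* Binary expansion of n, truncated to m bits, as a vector of Z_2^m
   (coordinate i = bit i of n). Injective on {0,...,2^m-1}. *)
Definition bin (m n : nat) : 'rV['F_2]_m :=
  \row_(i < m) ((odd (n %/ 2 ^ i)%N)%:R : 'F_2).

(* Squares of type B': 4x4 arrays with entries in {0,...,2^m-1}, zero first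
   row and column, every row and every column XOR-ing to 0 (XOR of entries =
   sum of binary expansions in Z_2^m). *)
Definition typeBp (m : nat) (S : 'I_4 -> 'I_4 -> nat) : Prop :=
  [/\ (forall i j, (S i j < 2 ^ m)%N),
      (forall j, S ord0 j = 0%N),
      (forall i, S i ord0 = 0%N),
      (forall i, \sum_(j < 4) bin m (S i j) = 0) &
      (forall j, \sum_(i < 4) bin m (S i j) = 0)].

Definition canon : seq (seq (seq nat)) :=
  [:: [:: [:: 0;0;0;0]; [:: 0;0;0;0]; [:: 0;0;0;0]; [:: 0;0;0;0]];
      [:: [:: 0;0;0;0]; [:: 0;0;0;0]; [:: 0;0;1;1]; [:: 0;0;1;1]];
      [:: [:: 0;0;0;0]; [:: 0;0;0;0]; [:: 0;1;2;3]; [:: 0;1;2;3]];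
      [:: [:: 0;0;0;0]; [:: 0;0;1;1]; [:: 0;1;0;1]; [:: 0;1;1;0]];
      [:: [:: 0;0;0;0]; [:: 0;0;1;1]; [:: 0;1;2;3]; [:: 0;1;3;2]];
      [:: [:: 0;0;0;0]; [:: 0;0;1;1]; [:: 0;2;0;2]; [:: 0;2;1;3]];
      [:: [:: 0;0;0;0]; [:: 0;0;1;1]; [:: 0;2;4;6]; [:: 0;2;5;7]];
      [:: [:: 0;0;0;0]; [:: 0;1;2;3]; [:: 0;2;3;1]; [:: 0;3;1;2]];
      [:: [:: 0;0;0;0]; [:: 0;1;2;3]; [:: 0;2;4;6]; [:: 0;3;6;5]];
      [:: [:: 0;0;0;0]; [:: 0;1;2;3]; [:: 0;4;8;12]; [:: 0;5;10;15]]]%N.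

(* Entry (i,j) of the k-th canonical array (k = 0..9 for arrays (1)..(10)). *)
Definition canon_sq (k : 'I_10) (i j : 'I_4) : nat :=
  nth 0%N (nth [::] (nth [::] canon k) i) j.

(* Main.v *)
Require Import Defs.
From mathcomp Require Import all_boot all_order all_algebra all_fingroup.

Fixpoint bitn (i x : nat) : bool := if i is i'.+1 then bitn i' x./2 else odd x.
Definition xor4 (x y : nat) : nat :=
  ((bitn 0 x != bitn 0 y) + 2 * (bitn 1 x != bitn 1 y) +
   4 * (bitn 2 x != bitn 2 y) + 8 * (bitn 3 x != bitn 3 y))%N.
Fixpoint fs (xs : seq nat) (sel : seq bool) : nat :=
  match xs, sel with
  | x :: xs', b :: sel' => xor4 (if b then x else 0) (fs xs' sel')
  | _, _ => 0
  end.
Definition bits (r n : nat) := mkseq (fun l => bitn l n) r.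
Definition canon_n (k i j : nat) : nat := nth 0 (nth [::] (nth [::] canon k) i) j.
Definition etab (i j : nat) := canon_n 9 i j.
Definition tbls : seq (seq nat) :=
  [:: [:: 0;1;2;3]; [:: 0;2;1;3]; [:: 0;3;2;1]; [:: 0;1;3;2]; [:: 0;2;3;1]; [:: 0;3;1;2]].
Definition pact (p i : nat) : nat := nth 0 (nth [:: 0;1;2;3] tbls p) i.
Fixpoint all_lists (n : nat) (P : seq bool -> bool) : bool :=
  if n is n'.+1 then all_lists n' (fun s => P (true :: s)) && all_lists n' (fun s => P (false :: s))
  else P [::].
Definition cert := (nat * nat * nat * bool * seq nat)%type.
Definition i4 := iota 0 4.
Definition valid (l : seq bool) (c : cert) : bool :=
  let: (k, ps, pt, tr, xs) := c in
  let r := size xs in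
  [&& k < 10,
      all (fun i => all (fun j => canon_n k i j < 2 ^ r) i4) i4,
      all (fun i => all (fun j =>
         let ii := if tr then pact pt j else pact ps i in
         let jj := if tr then pact ps i else pact pt j in
         nth false l (xor4 (etab i j) (fs xs (bits r (canon_n k ii jj))))) i4) i4
    & all_lists r (fun sel => ~~ has id sel || ~~ nth false l (fs xs sel))].
Definition cons3 (a c b : bool) : bool :=
  [&& (b && a) ==> c, (b && c) ==> a & (a && c) ==> b].
Definition okb (pre : seq bool) (b : bool) : bool :=
  let x := size pre in
  ((x == 0) ==> b) &&
  all (fun y => let z := xor4 x y in (x <= z) || cons3 (nth false pre y) (nth false pre z) b) (iota 0 x).
Fixpoint dfs (n : nat) (pre : seq bool) (P : seq bool -> bool) : bool :=
  if n is n'.+1 then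
    (if okb pre true then dfs n' (rcons pre true) P else true) &&
    (if okb pre false then dfs n' (rcons pre false) P else true)
  else P pre.
Definition certs : seq cert := [:: (0, 0, 0, false, [:: ]);
 (1, 0, 0, false, [:: 15]);
 (1, 0, 1, false, [:: 15]);
 (1, 0, 2, false, [:: 10]);
 (1, 1, 0, false, [:: 15]);
 (1, 1, 1, false, [:: 15]);
 (1, 1, 2, false, [:: 10]);
 (1, 2, 0, false, [:: 12]);
 (1, 2, 1, false, [:: 12]);
 (1, 2, 2, false, [:: 8]);
 (2, 0, 0, false, [:: 5; 10]);
 (2, 0, 0, true, [:: 3; 12]);
 (2, 0, 1, true, [:: 3; 12]);
 (2, 0, 2, true, [:: 2; 8]);
 (2, 1, 0, false, [:: 5; 10]);
 (2, 2, 0, false, [:: 4; 8]);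
 (3, 0, 0, false, [:: 10]);
 (3, 0, 1, false, [:: 10]);
 (3, 0, 2, false, [:: 15]);
 (3, 0, 3, false, [:: 15]);
 (3, 0, 4, false, [:: 15]);
 (3, 0, 5, false, [:: 15]);
 (4, 0, 0, false, [:: 5; 15]);
 (4, 0, 1, false, [:: 10; 15]);
 (4, 0, 2, false, [:: 15; 5]);
 (4, 1, 0, false, [:: 5; 15]);
 (4, 1, 1, false, [:: 10; 15]);
 (4, 1, 2, false, [:: 15; 5]);
 (4, 2, 0, false, [:: 15; 8]);
 (4, 2, 1, false, [:: 15; 4]);
 (4, 2, 2, false, [:: 10; 8]);
 (5, 0, 0, false, [:: 10; 5]);
 (5, 0, 1, false, [:: 5; 10]);
 (5, 0, 2, false, [:: 10; 15]);
 (5, 0, 3, false, [:: 15; 5]);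
 (5, 0, 4, false, [:: 5; 15]);
 (5, 0, 5, false, [:: 15; 10]);
 (5, 2, 0, false, [:: 15; 12]);
 (5, 2, 1, false, [:: 15; 12]);
 (5, 2, 2, false, [:: 10; 12]);
 (5, 2, 3, false, [:: 15; 8]);
 (5, 2, 4, false, [:: 10; 12]);
 (5, 2, 5, false, [:: 15; 8]);
 (5, 3, 0, false, [:: 8; 15]);
 (5, 3, 1, false, [:: 4; 15]);
 (5, 3, 2, false, [:: 8; 15]);
 (5, 3, 3, false, [:: 12; 10]);
 (5, 3, 4, false, [:: 4; 15]);
 (5, 3, 5, false, [:: 12; 10]);
 (6, 0, 0, false, [:: 3; 5; 8]);
 (6, 0, 1, false, [:: 3; 10; 4]);
 (6, 0, 2, false, [:: 2; 15; 8]);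
 (6, 1, 0, false, [:: 12; 5; 2]);
 (6, 1, 1, false, [:: 12; 10; 1]);
 (6, 1, 2, false, [:: 8; 15; 2]);
 (6, 2, 0, false, [:: 15; 4; 8]);
 (6, 2, 1, false, [:: 15; 8; 4]);
 (6, 2, 2, false, [:: 10; 12; 8]);
 (7, 0, 0, false, [:: 10; 15]);
 (7, 0, 1, false, [:: 5; 15]);
 (8, 0, 0, false, [:: 1; 4; 8]);
 (8, 0, 1, false, [:: 2; 8; 4]);
 (8, 0, 2, false, [:: 3; 12; 8]);
 (8, 0, 3, false, [:: 1; 4; 12]);
 (8, 0, 4, false, [:: 3; 12; 4]);
 (8, 0, 5, false, [:: 2; 8; 12]);
 (9, 0, 0, false, [:: 1; 2; 4; 8])].

Lemma finite_check : dfs 16 [::] (fun l => has (valid l) certs).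
Proof. vm_compute. reflexivity. Qed.

Lemma dfs_spec n pre P : dfs n pre P -> forall s, size s = n ->
  (forall x, size pre <= x < size pre + n ->
     okb (take x (pre ++ s)) (nth false (pre ++ s) x)) -> P (pre ++ s).
Proof.
elim: n pre => [|n IH] pre /=.
  by move=> H [|] // _ _; rewrite cats0.
move=> /andP[H1 H2] [|b s] //= [sz] Hok.
have okpre : okb pre b.
  have := Hok (size pre); rewrite leqnn /= addnS ltnS leq_addr => /(_ isT).
  by rewrite take_size_cat // nth_cat ltnn subnn.
rewrite -cat_rcons; apply: IH => //.
  by case: b okpre {Hok} H1 H2 => ->.
move=> x; rewrite size_rcons => /andP[x1 x2]; rewrite cat_rcons; apply: Hok.
by rewrite (leq_trans _ x1) ?leqnSn //= addnS -addSn.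
Qed.

Lemma all_lists_spec n P : all_lists n P -> forall s, size s = n -> P s.
Proof.
elim: n P => [|n IH] P /=; first by move=> H [|].
by move=> /andP[H1 H2] [|[] s] //= [sz]; [apply: (IH _ H1) | apply: (IH _ H2)].
Qed.

Lemma bitn_xor4 x y i : i < 4 -> bitn i (xor4 x y) = (bitn i x != bitn i y).
Proof.
case: i => [|[|[|[|i]]]] // _; rewrite /xor4;
by case: (bitn 0 x != bitn 0 y); case: (bitn 1 x != bitn 1 y);
case: (bitn 2 x != bitn 2 y); case: (bitn 3 x != bitn 3 y).
Qed.

Lemma xor4_lt x y : xor4 x y < 16.
Proof.
rewrite /xor4.
by case: (bitn 0 x != bitn 0 y); case: (bitn 1 x != bitn 1 y);
case: (bitn 2 x != bitn 2 y); case: (bitn 3 x != bitn 3 y).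
Qed.

Lemma fs_lt xs sel : fs xs sel < 16.
Proof. by case: xs sel => [|x xs] [|b sel] //=; apply: xor4_lt. Qed.

Lemma pact_lt p i : i < 4 -> pact p i < 4.
Proof.
by case: i => [|[|[|[|i]]]] //=; case: p => [|[|[|[|[|[|p]]]]]]; rewrite /pact /tbls /= ?nth_nil.
Qed.

Lemma pact0 p : pact p 0 = 0.
Proof. by case: p => [|[|[|[|[|[|p]]]]]]; rewrite /pact /tbls /= ?nth_nil. Qed.

Lemma pact_inj p x y : x < 4 -> y < 4 -> pact p x = pact p y -> x = y.
Proof.
by case: x => [|[|[|[|x]]]] //=; case: y => [|[|[|[|y]]]] //=;
  case: p => [|[|[|[|[|[|p]]]]]]; rewrite /pact /tbls /= ?nth_nil.
Qed.

Definition perm_fun (p : nat) (i : 'I_4) : 'I_4 := inord (pact p i).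
Lemma perm_fun_inj p : injective (perm_fun p).
Proof.
move=> x y /(congr1 val); rewrite /perm_fun /= !inordK ?pact_lt //.
by move/(@pact_inj p x y (ltn_ord x) (ltn_ord y)) => h; apply: val_inj.
Qed.
Definition perm_of (p : nat) : 'S_4 := perm (@perm_fun_inj p).

Lemma bitn_odd i n : bitn i n = odd (n %/ 2 ^ i).
Proof.
elim: i n => [|i IH] n /=; first by rewrite expn0 divn1.
by rewrite IH expnS divnMA divn2.
Qed.

Lemma bitn_big i n : n < 2 ^ i -> bitn i n = false.
Proof. by move=> h; rewrite bitn_odd divn_small. Qed.


Local Open Scope ring_scope.
Import GRing.Theory.

Lemma F2_cases (x : 'F_2) : x = 0 \/ x = 1.
Proof.
case: x => [[|[|n]] Hn]; [left | right | by []]; exact: val_inj.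
Qed.

Lemma F2_opp (x : 'F_2) : - x = x.
Proof. by case: (F2_cases x) => ->; rewrite ?oppr0 //; apply: val_inj. Qed.

Lemma F2_neq (x : 'F_2) : ((x != 0) : nat)%:R = x.
Proof. by case: (F2_cases x) => ->. Qed.

Lemma F2_bool (p q : bool) : ((p != q) : nat)%:R = (p : nat)%:R + (q : nat)%:R :> 'F_2.
Proof. by case: p; case: q => //=; rewrite ?addr0 ?add0r //; apply: val_inj. Qed.

Lemma rv_opp m (u : 'rV['F_2]_m) : - u = u.
Proof. by apply/rowP => j; rewrite mxE F2_opp. Qed.

Lemma rv_add_eq0 m (u v : 'rV['F_2]_m) : u + v = 0 -> u = v.
Proof. by move/eqP; rewrite addr_eq0 rv_opp => /eqP. Qed.

Definition phi m (a b c d : 'rV['F_2]_m) (x : nat) : 'rV['F_2]_m :=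
  (bitn 0 x : nat)%:R *: a + (bitn 1 x : nat)%:R *: b +
  (bitn 2 x : nat)%:R *: c + (bitn 3 x : nat)%:R *: d.
Arguments phi {m}.

Lemma phi0 m (a b c d : 'rV['F_2]_m) : phi a b c d 0 = 0.
Proof. by rewrite /phi /= !scale0r !addr0. Qed.

Lemma phi_xor m (a b c d : 'rV['F_2]_m) x y :
  phi a b c d (xor4 x y) = phi a b c d x + phi a b c d y.
Proof.
rewrite /phi !bitn_xor4 // !F2_bool !scalerDl.
by rewrite (addrACA (_ *: a)) (addrACA (_ *: a + _ *: b) _ (_ *: c)) (addrACA (_ *: a + _ *: b + _ *: c) _ (_ *: d)).
Qed.

Lemma phi_fs m (a b c d : 'rV['F_2]_m) xs sel : size sel = size xs ->
  phi a b c d (fs xs sel) =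
  \sum_(l < size xs) (nth false sel l : nat)%:R *: phi a b c d (nth 0%N xs l).
Proof.
elim: xs sel => [|x xs IH] [|s sel] //=.
  by rewrite big_ord0 phi0.
move=> sz; have {}sz : size sel = size xs by apply/eqP; move/eqP: sz.
rewrite phi_xor big_ord_recl /= IH //; congr (_ + _).
by case: s; rewrite ?phi0 ?scale1r ?scale0r.
Qed.

Lemma bin_row m n : bin m n = \row_(i < m) (bitn i n : nat)%:R.
Proof. by apply/rowP => i; rewrite !mxE bitn_odd. Qed.

Lemma bin0 m : bin m 0 = 0.
Proof. by apply/rowP => i; rewrite !mxE div0n. Qed.

Lemma sum_trunc (V : zmodType) r m (G : nat -> V) : (r <= m)%N ->
  (forall i, (r <= i)%N -> G i = 0) -> \sum_(i < m) G i = \sum_(i < r) G i.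
Proof.
move=> rm H; rewrite -(subnKC rm) big_split_ord /= [X in _ + X]big1 ?addr0 // => i _.
by apply: H; rewrite leq_addr.
Qed.

Lemma bin_mul m r n (A : 'M['F_2]_m) (w : nat -> 'rV['F_2]_m) :
  (r <= m)%N -> (n < 2 ^ r)%N -> (forall i : 'I_m, (i < r)%N -> row i A = w i) ->
  bin m n *m A = \sum_(l < r) (bitn l n : nat)%:R *: w l.
Proof.
move=> rm nr HA; rewrite mulmx_sum_row.
have Hb : forall i, (r <= i)%N -> bitn i n = false.
  by move=> i ri; rewrite bitn_big // (leq_trans nr) // leq_pexp2l.
rewrite (eq_bigr (fun i : 'I_m => (bitn i n : nat)%:R *: w i)); last first.
  move=> i _; rewrite mxE -bitn_odd; case: (ltnP i r) => ir; first by rewrite HA.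
  by rewrite Hb // !scale0r.
apply: (@sum_trunc _ r m (fun i => (bitn i n : nat)%:R *: w i)) rm _ => i ri.
by rewrite Hb // scale0r.
Qed.

Lemma extend m r (w : nat -> 'rV['F_2]_m) :
  (forall v : 'rV['F_2]_r, \sum_(l < r) v 0 l *: w l = 0 -> v = 0) ->
  (r <= m)%N /\
  exists2 A : 'M['F_2]_m, A \in unitmx & forall i : 'I_m, (i < r)%N -> row i A = w i.
Proof.
move=> indep.
pose W : 'M['F_2]_(r, m) := \matrix_(l < r) w l.
have rfW : row_free W.
  rewrite -kermx_eq0; apply/rowV0P => v /sub_kermxP vW0; apply: indep.
  by rewrite -[X in _ = X]vW0 mulmx_sum_row; apply: eq_bigr => l _; rewrite rowK.
have rm : (r <= m)%N by move/eqP: rfW => <-; apply: rank_leq_col.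
split => //.
pose F : 'M['F_2]_m := \matrix_(i < m) (if (i < r)%N then w i else 0).
have rowP1 : forall (B : 'M['F_2]_m) (l : 'I_r),
    row l (pid_mx r *m B) = row (widen_ord rm l) B.
  move=> B l; apply/rowP => j; rewrite !mxE (bigD1 (widen_ord rm l)) //= big1 ?addr0.
    by rewrite !mxE eqxx ltn_ord mul1r.
  move=> k kl; rewrite !mxE; case: eqP => [e|]; last by rewrite mul0r.
  by case/eqP: kl; apply: val_inj.
have UF : pid_mx r *m F = W.
  by apply/row_matrixP => l; rewrite rowP1 !rowK /= ltn_ord.
have rk : \rank ((pid_mx r : 'M['F_2]_(r, m)) *m F) = \rank (pid_mx r : 'M['F_2]_(r, m)).
  by rewrite UF rank_pid_mx //; apply/eqP.
case: (complete_unitmx rk) => g gU Eg.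
exists g => // i ir.
have -> : i = widen_ord rm (Ordinal ir) by apply: val_inj.
by rewrite -rowP1 -Eg UF rowK.
Qed.

Lemma sum4 (V : zmodType) (F : 'I_4 -> V) :
  \sum_(j < 4) F j = F (inord 0) + F (inord 1) + F (inord 2) + F (inord 3).
Proof.
rewrite !big_ord_recl big_ord0 addr0 !addrA.
by congr (F _ + F _ + F _ + F _); apply: val_inj; rewrite /= inordK.
Qed.

Definition Tm m (S : 'I_4 -> 'I_4 -> nat) (i j : nat) := bin m (S (inord i) (inord j)).

Lemma entries m S : typeBp m S -> forall i j : 'I_4,
  bin m (S i j) = phi (Tm m S 1 1) (Tm m S 1 2) (Tm m S 2 1) (Tm m S 2 2) (etab i j).
Proof.
case=> _ H0r H0c Hr Hc.
have o0 : inord 0 = ord0 :> 'I_4 by apply: val_inj; rewrite /= inordK.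
have T0j : forall j, Tm m S 0 j = 0 by move=> j; rewrite /Tm o0 H0r bin0.
have Ti0 : forall i, Tm m S i 0 = 0 by move=> i; rewrite /Tm o0 H0c bin0.
have Tr : forall i, Tm m S i 3 = Tm m S i 1 + Tm m S i 2.
  move=> i; have := Hr (inord i); rewrite sum4 -!/(Tm m S i _) Ti0 add0r.
  by move/rv_add_eq0 ->.
have Tc : forall j, Tm m S 3 j = Tm m S 1 j + Tm m S 2 j.
  move=> j; have := Hc (inord j); rewrite sum4 -!/(Tm m S _ j) T0j add0r.
  by move/rv_add_eq0 ->.
suff H : forall i j, (i < 4)%N -> (j < 4)%N ->
    Tm m S i j = phi (Tm m S 1 1) (Tm m S 1 2) (Tm m S 2 1) (Tm m S 2 2) (etab i j).
  by move=> i j; rewrite -H // /Tm !inord_val.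
move=> [|[|[|[|i]]]] [|[|[|[|j]]]] //= _ _; rewrite /etab /canon_n /canon /phi /=;
  rewrite ?T0j ?Ti0 ?Tr ?Tc ?Tr ?scale1r ?scale0r ?addr0 ?add0r ?addrA ?(addrAC (Tm m S 1 1) (Tm m S 2 1)) //.
Qed.

Theorem mainTheorem6 (m : nat) (S : 'I_4 -> 'I_4 -> nat) :
  typeBp m S ->
  exists (k : 'I_10) (A : 'M['F_2]_m) (b : 'rV['F_2]_m) (s t : 'S_4) (tr : bool),
    [/\ A \in unitmx, s ord0 = ord0, t ord0 = ord0,
        (forall i j, (canon_sq k i j < 2 ^ m)%N) &
        (forall i j : 'I_4,
           bin m (S i j) =
           bin m (canon_sq k (if tr then t j else s i) (if tr then s i else t j))
             *m A + b)].
Proof.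
move=> HS; move: (@entries m S HS).
move: (Tm m S 1 1) (Tm m S 1 2) (Tm m S 2 1) (Tm m S 2 2) => a b c d E.
pose K x := phi a b c d x == 0.
pose l := mkseq K 16.
have nthl : forall y, (y < 16)%N -> nth false l y = K y.
  by move=> y hy; rewrite nth_mkseq.
have Hc : has (valid l) certs.
  have := @dfs_spec 16 [::] (fun l => has (valid l) certs) finite_check l (size_mkseq _ _).
  apply=> x /andP[_ hx]; rewrite cat0s.
  rewrite /okb size_take size_mkseq hx; apply/andP; split.
    by apply/implyP => /eqP x0; rewrite nthl // x0 /K phi0.
  apply/allP => y; rewrite mem_iota add0n => /andP[_ yx].
  case: (leqP x (xor4 x y)) => [//|zx] /=.
  have y16 : (y < 16)%N by apply: ltn_trans hx.
  have z16 : (xor4 x y < 16)%N by apply: ltn_trans hx.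
  rewrite !nth_take // !nthl // /K /cons3 phi_xor.
  case: (eqVneq (phi a b c d x) 0) => [->|nx]; case: (eqVneq (phi a b c d y) 0) => [->|ny];
    rewrite ?addr0 ?add0r ?eqxx ?(negPf nx) ?(negPf ny) //=.
case/hasP: Hc => [[[[[k ps] pt] tr] xs]] _; rewrite /valid.
case/and4P => hk hbd heq hind.
set r := size xs in hbd heq hind.
pose w l := phi a b c d (nth 0%N xs l).
have indep : forall v : 'rV['F_2]_r, \sum_(l < r) v 0 l *: w l = 0 -> v = 0.
  move=> v hv; pose sel := [seq v 0 q != 0 | q <- enum 'I_r].
  have ssel : size sel = r by rewrite size_map size_enum_ord.
  have := @all_lists_spec r _ hind sel ssel.
  have -> : nth false l (fs xs sel) = true.
    rewrite nthl ?fs_lt // /K phi_fs // -[X in _ == X]hv; apply/eqP.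
    apply: eq_bigr => i _; rewrite (nth_map i) ?size_enum_ord // nth_ord_enum F2_neq //.
  rewrite orbF => Hn.
  apply/rowP => i; rewrite mxE.
  case: (eqVneq (v 0 i) 0) => // nz; case/negP: Hn.
  apply/(has_nthP false); exists (nat_of_ord i); rewrite ?ssel //.
  by rewrite (nth_map i) ?size_enum_ord // nth_ord_enum.
have [rm [A Au HA]] := @extend m r w indep.
have permv : forall p (i : 'I_4), perm_of p i = inord (pact p i).
  by move=> p i; rewrite permE.
exists (inord k), A, 0, (perm_of ps), (perm_of pt), tr; split => //.
- by apply: val_inj; rewrite permv /= pact0 inordK.
- by apply: val_inj; rewrite permv /= pact0 inordK.
- move=> i j; rewrite /canon_sq inordK //.
  have := allP hbd i; rewrite mem_iota ltn_ord => /(_ isT) /allP /(_ j).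
  rewrite mem_iota ltn_ord => /(_ isT) h.
  by apply: (leq_trans h); apply: leq_pexp2l.
move=> i j; rewrite addr0 E.
set II := if tr then pact pt j else pact ps i.
set JJ := if tr then pact ps i else pact pt j.
have IIl : (II < 4)%N by rewrite /II; case: ifP => _; apply: pact_lt.
have JJl : (JJ < 4)%N by rewrite /JJ; case: ifP => _; apply: pact_lt.
have -> : canon_sq (inord k) (if tr then perm_of pt j else perm_of ps i)
   (if tr then perm_of ps i else perm_of pt j) = canon_n k II JJ.
  by rewrite /II /JJ; case: ifP => _; rewrite /canon_sq /canon_n !permv /= !inordK ?pact_lt.
have nr : (canon_n k II JJ < 2 ^ r)%N.
  have := allP hbd II; rewrite mem_iota IIl => /(_ isT) /allP /(_ JJ).
  by rewrite mem_iota JJl => /(_ isT).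
rewrite (@bin_mul m r _ A w rm nr HA).
have := allP heq i; rewrite mem_iota ltn_ord => /(_ isT) /allP /(_ j).
rewrite mem_iota ltn_ord => /(_ isT) /=; rewrite -/II -/JJ.
rewrite nthl ?xor4_lt // /K phi_xor => /eqP /rv_add_eq0 ->.
rewrite phi_fs ?size_mkseq //; apply: eq_bigr => q _.
by rewrite nth_mkseq.
Qed.
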